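(* Let $k\ge2$ be an integer and $n\in\mathbb Z$. Then $\det(L_k^{(n)})=\det(L_k^{(0)})$ if $k$ is odd, and $\det(L_k^{(n)})=(-1)^n\det(L_k^{(0)})$ if $k$ is even.
   Context: Fix an integer $k\ge2$. Let $Q_k$ be the $k\times k$ matrix whose first row is all ones, with $(Q_k)_{i+1,i}=1$ for $1\le i\le k-1$ and all other entries $0$, and for $r\in\mathbb Z$ let $Q_k^r$ denote its $r$-th power. The generalized Lucas sequence of order $k$, $(l_{k,n})_{n\in\mathbb Z}$, is the two-sided sequence satisfying $l_{k,n+k}=l_{k,n+k-1}+\dots+l_{k,n}$ for all $n\in\mathbb Z$ with initial values $l_{k,r}=\operatorname{trace}(Q_k^r)$ for $0\le r\le k-1$ (so $l_{k,0}=k$ and $l_{k,r}=2^r-1$ for $1\le r\le k-1$). For $n\in\mathbb Z$ the generalized Lucas matrix $L_k^{(n)}$ is the $k\times k$ matrix with entries $(L_k^{(n)})_{i,1}=l_{k,k+n-i}$ and $(L_k^{(n)})_{i,j}=\sum_{m=n-i+j-1}^{k+n-i-1} l_{k,m}$ for $2\le j\le k$, $1\le i\le k$. *)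

(* Defs.v *)
From HB Require Import structures.
From mathcomp Require Import all_boot all_order all_algebra.
Set Implicit Arguments. Unset Strict Implicit. Unset Printing Implicit Defensive.
Import Order.TTheory GRing.Theory Num.Theory.
Local Open Scope ring_scope.

Definition Qmat (k : nat) : 'M[int]_k :=
  \matrix_(i < k, j < k) (if (i == 0%N :> nat) then 1 else if (i == j.+1 :> nat) then 1 else 0).

Definition is_gen_lucas (k : nat) (l : int -> int) : Prop :=
  (forall n : int, l (n + k%:Z) = \sum_(t < k) l (n + t%:Z)) /\
  (forall r : nat, (r < k)%N -> l r%:Z = \tr (Qmat k ^+ r)).

Definition zsum (l : int -> int) (a b : int) : int :=
  if a <= b then \sum_(t < absz (b - a + 1)) l (a + t%:Z) else 0.

(* generalized Lucas matrix L_k^(n); entries 1-indexed in the paper,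
   here i, j : 'I_k stand for paper indices i+1, j+1. *)
Definition lucas_mat (k : nat) (l : int -> int) (n : int) : 'M[int]_k :=
  \matrix_(i < k, j < k)
    (if (j == 0%N :> nat) then l (k%:Z + n - (i.+1)%:Z)
     else zsum l (n - (i.+1)%:Z + (j.+1)%:Z - 1) (k%:Z + n - (i.+1)%:Z - 1)).

(* Main.v *)
Require Import Defs.
From HB Require Import structures.
From mathcomp Require Import all_boot all_order all_algebra.
From mathcomp Require Import zify ring.
Import Order.TTheory GRing.Theory Num.Theory.
Local Open Scope ring_scope.

Definition Fv (k : nat) (l : int -> int) (s : int) (j : nat) : int :=
  if (j == 0)%N then l (k%:Z + s)
  else zsum l (s + (j.+1)%:Z - 1) (k%:Z + s - 1).

Lemma lucas_matE k l n (i j : 'I_k) :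
  lucas_mat k l n i j = Fv k l (n - (i.+1)%:Z) j.
Proof. by rewrite mxE /Fv !addrA. Qed.

Lemma zsumE (k : nat) (l : int -> int) (s : int) (j : nat) : (j < k)%N ->
  zsum l (s + (j.+1)%:Z - 1) (k%:Z + s - 1) = \sum_(t < k - j) l (s + j%:Z + t%:Z).
Proof.
move=> hj; have hj2 := ssrnat.ltP hj; rewrite /zsum.
have -> : (s + (j.+1)%:Z - 1 <= k%:Z + s - 1) = true by apply/idP; lia.
have -> : (k%:Z + s - 1 - (s + (j.+1)%:Z - 1) + 1) = (k - j)%N%:Z by lia.
apply: eq_bigr => t _; by rewrite -[j.+1]addn1 PoszD addrA addrK.
Qed.

Lemma Fv_rec (k : nat) (l : int -> int) (s : int) (j : nat) : is_gen_lucas k l -> (j < k)%N ->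
  Fv k l (s + k%:Z) j = \sum_(t < k) Fv k l (s + t%:Z) j.
Proof.
move=> [hrec _] hj; rewrite /Fv; case: eqP => _.
  rewrite addrA hrec; apply: eq_bigr => t _; congr l; lia.
rewrite zsumE //.
under [RHS]eq_bigr => t _ do rewrite zsumE //.
rewrite exchange_big /=; apply: eq_bigr => t _.
have -> : s + k%:Z + j%:Z + t%:Z = (s + j%:Z + t%:Z) + k%:Z by lia.
rewrite hrec; apply: eq_bigr => u _; congr l; lia.
Qed.
Lemma step (k : nat) (l : int -> int) (n : int) : is_gen_lucas k l ->
  lucas_mat k l (n + 1) = Qmat k *m lucas_mat k l n.
Proof.
move=> hl; apply/matrixP => i j; rewrite lucas_matE [RHS]mxE.
under eq_bigr => m _ do rewrite lucas_matE mxE.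
case: i => [[|i] Hi] /=.
  under eq_bigr => m _ do rewrite mul1r.
  have -> : n + 1 - 1%:Z = (n - k%:Z) + k%:Z by ring.
  rewrite Fv_rec //.
  rewrite (reindex_inj rev_ord_inj) /=; apply: eq_bigr => t _; congr Fv.
  have ht := ssrnat.ltP (ltn_ord t).
  lia.
have Hi' : (i < k)%N by apply: ltnW.
rewrite (bigD1 (Ordinal Hi')) //= eqxx mul1r big1 ?addr0.
  congr Fv; lia.
move=> m /eqP hm; case: eqP => [him|]; last by rewrite mul0r.
exfalso; apply: hm.
by apply: val_inj => /=; case: him.
Qed.

Lemma detQ (k : nat) : (0 < k)%N -> \det (Qmat k) = (-1) ^+ k.-1.
Proof.
case: k => // k _.
rewrite (expand_det_col _ ord_max) (bigD1 ord0) //= big1 ?addr0.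
  rewrite /cofactor mxE eqxx mul1r add0n /=.
  have -> : row' ord0 (col' ord_max (Qmat k.+1)) = 1%:M.
    apply/matrixP => a b; rewrite !mxE /=.
    rewrite /bump leq0n add1n eqSS.
    have -> : (k <= b)%N = false by apply/negbTE; rewrite -ltnNge; exact: ltn_ord.
    have -> : (false + b)%N = b by []. have -> : (a == b :> nat) = (a == b) by []. by case: (a == b).
  by rewrite det_scalar expr1n mulr1.
move=> i hi; rewrite mxE.
have -> : (i == 0%N :> nat) = false by apply/negbTE.
have -> : (i == (@ord_max k).+1 :> nat) = false.
  by apply/negbTE; rewrite neq_ltn ltnS leq_ord.
by rewrite mul0r.
Qed.
Lemma int_ind2 (P : int -> Prop) : P 0 -> (forall n, P n <-> P (n + 1)) -> forall n, P n.
Proof.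
move=> P0 HP [m|m].
  elim: m => [|m IH]; first exact: P0.
  have -> : Posz m.+1 = Posz m + 1 by lia.
  exact: (proj1 (HP m)).
elim: m => [|m IH].
  by apply: (proj2 (HP (Negz 0))).
apply: (proj2 (HP (Negz m.+1))); have -> : Negz m.+1 + 1 = Negz m by rewrite !NegzE; lia.
exact: IH.
Qed.

Theorem theorem4 (k : nat) (l : int -> int) (n : int) :
  (2 <= k)%N -> is_gen_lucas k l ->
  (odd k -> \det (lucas_mat k l n) = \det (lucas_mat k l 0)) /\
  (~~ odd k -> \det (lucas_mat k l n) = (-1) ^ n * \det (lucas_mat k l 0)).
Proof.
move=> hk hl.
have hs : forall m, \det (lucas_mat k l (m + 1)) = (-1) ^+ k.-1 * \det (lucas_mat k l m).
  by move=> m; rewrite step // det_mulmx detQ //; apply: leq_trans hk.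
rewrite -signr_odd in hs.
case: k hk hl hs => // k _ hl hs /=.
split => ho.
  move: hs; rewrite (negbTE ho) /= expr0 => hs.
  elim/int_ind2: n => // m; rewrite hs mul1r; done.
move: hs; rewrite negbK in ho; rewrite ho /= expr1 => hs.
elim/int_ind2: n => [|m]; first by rewrite expr0z mul1r.
rewrite hs exprzDr ?unitrN1 // expr1z mulrN1 mulNr mul1r.
split => [->|h]; first by rewrite mulNr.
by apply: oppr_inj; rewrite h mulNr.
Qed.
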